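(* Let $Q$ be a tree quiver, let $(M,x)$ be a radiation module such that $M$ is exceptional, and let $\mathcal B=\mathcal B(M,x)$ be a radiation basis. Let $y,z\in Q_0$ be neighbors with $d(x,y)+1=d(x,z)$. Then in the coefficient quiver $\Gamma(M,\mathcal B)$ every element of $\mathcal B_z$ is joined by an arrow to precisely one element of $\mathcal B_y$. If $\dim M_y\le\dim M_z$, then every element of $\mathcal B_y$ is joined by an arrow to at least one element of $\mathcal B_z$. If $\dim M_y\ge \dim M_z$, then every element of $\mathcal B_y$ is joined by an arrow to at most one element of $\mathcal B_z$.
   Context: $k$ is a field; $Q$ is a locally finite quiver whose underlying graph is a tree; $d(u,v)$ is the distance of vertices in the underlying graph; representations are finite-dimensional. A representation $M$ is exceptional if it is indecomposable and $\operatorname{Ext}^1(M,M)=0$. $S(x)$ is the simple at $x$; $Q^x$ is $Q$ with $x$ and arrows at $x$ deleted; restriction to $Q^x$ forgets $M_x$ and the maps of arrows at $x$. Coefficient quiver: for bases $\mathcal B_z$ of $M_z$, $\Gamma(M,\mathcal B)$ has vertex set the disjoint union of the $\mathcal B_z$; for an arrow $\alpha\colon u\to w$ and $b\in\mathcal B_u$ write $M_\alpha(b)=\sum_{b'\in\mathcal B_w}c_{b'b}b'$; there is an arrow $b\to b'$ labelled $\alpha$ iff $c_{b'b}\ne0$. Radiation modules (recursive): pairs $(M,x)$, $M$ indecomposable, $\dim M_x=1$. $(S(x),x)$ is one. If $M$ has length $\ge 2$, $(M,x)$ is one if the restriction of $M$ to $Q^x$ is $\bigoplus_i N(i)$ with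 $N(i)$ indecomposable, $\operatorname{Hom}(N(i),N(j))=0$ for $i\ne j$, and for each $i$ a neighbor $y(i)$ of $x$ with $(N(i),y(i))$ a radiation module. Radiation basis containing nonzero $b\in M_x$ (recursive): for $S(x)$ it is $\{b\}$; otherwise fix such a decomposition, let $\alpha_i$ be the arrow between $x$ and $y(i)$; if $\alpha_i\colon x\to y(i)$ let $b_i$ be the $N(i)_{y(i)}$-component of $M_{\alpha_i}(b)$ in $M_{y(i)}=\bigoplus_jN(j)_{y(i)}$; if $\alpha_i\colon y(i)\to x$ let $b_i\in N(i)_{y(i)}$ with $M_{\alpha_i}(b_i)=b$; then $\mathcal B(M,x)=\{b\}\cup\bigcup_i\mathcal B(N(i),y(i))$ with $\mathcal B(N(i),y(i))$ a radiation basis of $(N(i),y(i))$ containing $b_i$. $\mathcal B_z$ denotes the elements lying in $M_z$. *)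

(* Defs.v *)
(* Quiver representations are given concretely:
   M_z = k^(dim z) (row vectors), M_a acts by v |-> v *m mat a.
   Subspaces are {vspace 'rV[k]_n} (mathcomp vector.v). *)
From Stdlib Require List.
From HB Require Import structures.
From mathcomp Require Import all_boot all_order all_algebra.
Set Implicit Arguments. Unset Strict Implicit. Unset Printing Implicit Defensive.
Import GRing.Theory.
Local Open Scope ring_scope.

Record quiver := Quiver {
  vert : Type;
  arr : Type;
  src : arr -> vert;
  tgt : arr -> vert }.

Section Graph.
Variable Q : quiver.

(* a step of a walk in the underlying graph: (a, true) goes src a -> tgt a,
   (a, false) goes tgt a -> src a *)
Definition st_start (s : arr Q * bool) := if s.2 then src s.1 else tgt s.1.
Definition st_end (s : arr Q * bool) := if s.2 then tgt s.1 else src s.1.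

Inductive walk : vert Q -> vert Q -> list (arr Q * bool) -> Prop :=
| walk_nil u : walk u u nil
| walk_cons u w s p : u = st_start s -> walk (st_end s) w p -> walk u w (s :: p).

Fixpoint reduced (p : list (arr Q * bool)) : Prop :=
  match p with
  | s1 :: ((s2 :: _) as p') => ~ (s1.1 = s2.1 /\ s1.2 = ~~ s2.2) /\ reduced p'
  | _ => True
  end.

(* underlying graph is a tree: connected, and no cycle (a cycle, including loops
   and multiple edges, is a nonempty closed walk without backtracking) *)
Definition is_tree : Prop :=
  (forall u v, exists p, walk u v p) /\
  (forall u p, walk u u p -> reduced p -> p = nil).

Definition locally_finite : Prop :=
  forall v, exists s : list (arr Q), forall a, src a = v \/ tgt a = v -> List.In a s.

Definition adjacent (u v : vert Q) : Prop :=
  exists a, (src a = u /\ tgt a = v) \/ (src a = v /\ tgt a = u).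

Definition dist (u v : vert Q) (n : nat) : Prop :=
  (exists p, walk u v p /\ size p = n) /\ (forall p, walk u v p -> (n <= size p)%N).
End Graph.

Record rep (k : fieldType) (Q : quiver) := Rep {
  rdim : vert Q -> nat;
  mat : forall a : arr Q, 'M[k]_(rdim (src a), rdim (tgt a)) }.

Section Reps.
Variables (k : fieldType) (Q : quiver) (R : rep k Q).

Definition fin_dim : Prop :=
  exists s : list (vert Q), forall z, rdim R z <> 0%N -> List.In z s.

Definition subfam := forall z : vert Q, {vspace 'rV[k]_(rdim R z)}.
Definition full_fam : subfam := fun z => fullv.

(* U is a subrepresentation of (the restriction of) M to the full subquiver on
   the vertex set W *)
Definition is_subrep (W : vert Q -> Prop) (U : subfam) : Prop :=
  (forall z, ~ W z -> U z = 0%VS) /\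
  (forall a, W (src a) -> W (tgt a) ->
     forall v, v \in U (src a) -> v *m mat R a \in U (tgt a)).

Definition indecomposable (W : vert Q -> Prop) (U : subfam) : Prop :=
  is_subrep W U /\ (exists z, U z != 0%VS) /\
  forall U1 U2 : subfam, is_subrep W U1 -> is_subrep W U2 ->
    (forall z, W z -> (U1 z + U2 z)%VS = U z /\ directv (U1 z + U2 z)) ->
    (forall z, U1 z = 0%VS) \/ (forall z, U2 z = 0%VS).

Definition hom_zero (W : vert Q -> Prop) (U U' : subfam) : Prop :=
  forall f : forall z, 'M[k]_(rdim R z),
    (forall z, W z -> forall v, v \in U z -> v *m f z \in U' z) ->
    (forall a, W (src a) -> W (tgt a) -> forall v, v \in U (src a) ->
        v *m f (src a) *m mat R a = v *m mat R a *m f (tgt a)) ->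
    forall z, W z -> forall v, v \in U z -> v *m f z = 0.

(* Ext^1(M,M) = 0: the standard (Ringel) map
   (f_z)_z |-> (f_{sa} M_a - M_a f_{ta})_a, whose cokernel is Ext^1(M,M),
   is surjective *)
Definition ext1_self_zero : Prop :=
  forall g : forall a : arr Q, 'M[k]_(rdim R (src a), rdim R (tgt a)),
    exists f : forall z, 'M[k]_(rdim R z),
      forall a, g a = f (src a) *m mat R a - mat R a *m f (tgt a).

Definition exceptional : Prop :=
  indecomposable (fun _ => True) full_fam /\ ext1_self_zero.

Definition del (W : vert Q -> Prop) (x : vert Q) : vert Q -> Prop :=
  fun z => W z /\ z <> x.

Definition decomp (W : vert Q -> Prop) (x : vert Q) (U : subfam) (n : nat)
    (N : 'I_n -> subfam) : Prop :=
  forall z, del W x z ->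
    (\sum_(i < n) N i z)%VS = U z /\ directv (\sum_(i < n) N i z).

Inductive radiation : (vert Q -> Prop) -> subfam -> vert Q -> Prop :=
| rad_simple W U x :
    is_subrep W U -> W x -> \dim (U x) = 1%N ->
    (forall z, z <> x -> U z = 0%VS) -> radiation W U x
| rad_step W U x n (N : 'I_n -> subfam) (y : 'I_n -> vert Q) :
    indecomposable W U -> W x -> \dim (U x) = 1%N ->
    (exists z, z <> x /\ U z != 0%VS) (* length >= 2 *) ->
    decomp W x U N ->
    (forall i, indecomposable (del W x) (N i)) ->
    (forall i j, i != j -> hom_zero (del W x) (N i) (N j)) ->
    (forall i, adjacent x (y i)) ->
    (forall i, radiation (del W x) (N i) (y i)) ->
    radiation W U x.

Definition castv (z w : vert Q) (e : z = w) (v : 'rV[k]_(rdim R z)) : 'rV[k]_(rdim R w) :=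
  eq_rect z (fun u => 'rV[k]_(rdim R u)) v w e.

Definition basisfam := forall z : vert Q, seq 'rV[k]_(rdim R z).

Inductive rad_basis : (vert Q -> Prop) -> subfam -> forall x : vert Q,
    'rV[k]_(rdim R x) -> basisfam -> Prop :=
| rb_simple W U x b (B : basisfam) :
    is_subrep W U -> W x -> \dim (U x) = 1%N ->
    (forall z, z <> x -> U z = 0%VS) ->
    b \in U x -> b != 0 ->
    B x = [:: b] -> (forall z, z <> x -> B z = [::]) ->
    rad_basis W U b B
| rb_step W U x b (B : basisfam) n (N : 'I_n -> subfam) (y : 'I_n -> vert Q)
    (bi : forall i, 'rV[k]_(rdim R (y i))) (Bi : 'I_n -> basisfam) :
    indecomposable W U -> W x -> \dim (U x) = 1%N ->
    (exists z, z <> x /\ U z != 0%VS) ->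
    decomp W x U N ->
    (forall i, indecomposable (del W x) (N i)) ->
    (forall i j, i != j -> hom_zero (del W x) (N i) (N j)) ->
    (forall i, adjacent x (y i)) ->
    (forall i, radiation (del W x) (N i) (y i)) ->
    b \in U x -> b != 0 ->
    (* arrow alpha_i : x -> y(i): b_i is the N(i)_{y(i)}-component of M_alpha(b) *)
    (forall i a (e1 : src a = x) (e2 : tgt a = y i),
        bi i \in N i (y i) /\
        castv e2 (castv (esym e1) b *m mat R a) - bi i
          \in (\sum_(j < n | j != i) N j (y i))%VS) ->
    (* arrow alpha_i : y(i) -> x: M_alpha(b_i) = b, b_i in N(i)_{y(i)} *)
    (forall i a (e1 : src a = y i) (e2 : tgt a = x),
        bi i \in N i (y i) /\
        castv e2 (castv (esym e1) (bi i) *m mat R a) = b) ->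
    (forall i, rad_basis (del W x) (N i) (bi i) (Bi i)) ->
    perm_eq (B x) (b :: flatten [seq Bi i x | i <- enum 'I_n]) ->
    (forall z, z <> x -> perm_eq (B z) (flatten [seq Bi i z | i <- enum 'I_n])) ->
    rad_basis W U b B.

Definition gamma_vert (B : basisfam) := {z : vert Q & 'I_(size (B z))}.

Definition gamma_arrow (B : basisfam) (e e' : gamma_vert B) : Prop :=
  exists a (i : 'I_(size (B (src a)))) (j : 'I_(size (B (tgt a)))),
    e = existT _ (src a) i /\ e' = existT _ (tgt a) j /\
    coord (in_tuple (B (tgt a))) j (tnth (in_tuple (B (src a))) i *m mat R a) != 0.

Definition joined (B : basisfam) (e e' : gamma_vert B) : Prop :=
  gamma_arrow e e' \/ gamma_arrow e' e.
End Reps.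

(* Main.v *)
Require Import Defs.
From HB Require Import structures.
From mathcomp Require Import all_boot all_order all_algebra.
From Stdlib Require Import Classical ClassicalEpsilon Eqdep.
Import GRing.Theory.
Set Implicit Arguments. Unset Strict Implicit.

Section GraphLemmas.
Context {Q : quiver}.
Local Notation V := (vert Q).
Local Notation step := (arr Q * bool)%type.
Implicit Types (u v w m t : V) (p q r : seq step) (s : step).

Definition vs (u : V) (p : seq step) : seq V := u :: map (@st_end Q) p.

Inductive awalk (P : V -> Prop) : V -> V -> seq step -> Prop :=
| aw_nil u : P u -> awalk P u u nil
| aw_cons u w s p : u = st_start s -> P u -> awalk P (st_end s) w p -> awalk P u w (s :: p).

Lemma awalk_walk P u v p : awalk P u v p -> walk u v p.
Proof. elim=> [u' _|u' w s p' E _ _ IH]; [exact: walk_nil | exact: walk_cons]. Qed.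

Lemma awalk_P P u v p : awalk P u v p -> P u /\ P v.
Proof. by elim=> // u' w s p' _ Pu _ [_ Pw]. Qed.

Lemma awalk_cons_inv P u v s p : awalk P u v (s :: p) ->
  u = st_start s /\ P u /\ awalk P (st_end s) v p.
Proof. by move=> H; inversion H; subst. Qed.

Lemma walk_cons_inv u v s p : walk u v (s :: p) ->
  u = st_start s /\ walk (st_end s) v p.
Proof. by move=> H; inversion H; subst. Qed.

Lemma awalk_weak (P P' : V -> Prop) u v p :
  (forall t, P t -> P' t) -> awalk P u v p -> awalk P' u v p.
Proof.
move=> H; elim=> [u' Pu|u' w s p' E Pu _ IH]; first by apply: aw_nil; auto.
by apply: aw_cons => //; auto.
Qed.

Lemma awalk_cat P u m v p q : awalk P u m p -> awalk P m v q -> awalk P u v (p ++ q).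
Proof.
elim=> [u' _|u' w s p' E Pu _ IH] //= H.
by apply: aw_cons => //; apply: IH.
Qed.

Lemma awalk_cat_inv P u v p q : awalk P u v (p ++ q) ->
  exists m, awalk P u m p /\ awalk P m v q.
Proof.
elim: p u => [|s p IH] u /=.
  move=> H; exists u; split; last by []; apply: aw_nil; exact: (proj1 (awalk_P H)).
move=> H; inversion H; subst.
have [m [H1 H2]] := IH _ H6; exists m; split => //; exact: aw_cons.
Qed.

Definition flip (s : step) : step := (s.1, ~~ s.2).
Lemma flipK s : flip (flip s) = s.
Proof. by case: s => a b; rewrite /flip /= negbK. Qed.
Lemma st_start_flip s : st_start (flip s) = st_end s.
Proof. by case: s => a []. Qed.
Lemma st_end_flip s : st_end (flip s) = st_start s.
Proof. by case: s => a []. Qed.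

Lemma awalk_rev P u v p : awalk P u v p -> awalk P v u (rev (map flip p)).
Proof.
elim=> [u' Pu|u' w s p' E Pu _ IH]; first exact: aw_nil.
rewrite map_cons rev_cons -cats1; apply: (awalk_cat IH).
apply: aw_cons; first by rewrite st_start_flip.
  exact: (awalk_P IH).2.
by rewrite st_end_flip -E; apply: aw_nil.
Qed.

Lemma walk_awalk (P : V -> Prop) u v p : walk u v p ->
  (forall t, List.In t (vs u p) -> P t) -> awalk P u v p.
Proof.
elim=> [u'|u' w s p' E _ IH] H; first by apply: aw_nil; apply: H; left.
apply: aw_cons => //; first by apply: H; left.
by apply: IH => t Ht; apply: H; right.
Qed.

Lemma walk_cat u m v p q : walk u m p -> walk m v q -> walk u v (p ++ q).
Proof. by elim=> // u' w s p' E _ IH H /=; apply: walk_cons => //; apply: IH. Qed.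

Lemma walk_cat_inv u v p q : walk u v (p ++ q) ->
  exists m, walk u m p /\ walk m v q.
Proof.
elim: p u => [|s p IH] u /=; first by move=> H; exists u; split => //; exact: walk_nil.
move=> H; inversion H; subst.
have [m [H1 H2]] := IH _ H5; exists m; split => //; exact: walk_cons.
Qed.

Definition bt (s1 s2 : step) := s1.1 = s2.1 /\ s1.2 = ~~ s2.2.

Lemma bt_end s1 s2 : s1.1 = s2.1 -> s1.2 = ~~ s2.2 -> st_end s2 = st_start s1.
Proof. by case: s1 s2 => a1 [] [a2 []] /= ->. Qed.

Lemma bt_flip s1 s2 : s1.1 = s2.1 -> s1.2 = ~~ s2.2 -> s2 = flip s1.
Proof. by case: s1 s2 => a1 [] [a2 []] /= -> . Qed.

Lemma not_reduced_split p : ~ reduced p ->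
  exists l1 s1 s2 l2, p = l1 ++ s1 :: s2 :: l2 /\ bt s1 s2.
Proof.
elim: p => [|s1 p IH] //=.
case: p IH => [|s2 p] IH //= Hn.
have [Hb|Hb] := classic (bt s1 s2).
  by exists [::], s1, s2, p.
have Hr : ~ reduced (s2 :: p) by move=> Hr; apply: Hn; split.
have [l1 [t1 [t2 [l2 [E Hb']]]]] := IH Hr.
by exists (s1 :: l1), t1, t2, l2; rewrite E.
Qed.

Lemma awalk_reduce P u v p : awalk P u v p -> exists q, awalk P u v q /\ reduced q.
Proof.
move: {2}(size p) (leqnn (size p)) => n; elim: n p => [|n IH] p Hs H.
  by case: p Hs H => [|s' p'] // _ H; exists [::].
have [Hr|Hr] := classic (reduced p); first by exists p.
have [l1 [s1 [s2 [l2 [E [H1 H2]]]]]] := not_reduced_split Hr.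
subst p; have [m [Ha Hb]] := awalk_cat_inv H.
have [_ [_ /awalk_cons_inv [_ [_ H11]]]] := awalk_cons_inv Hb.
have Hm : st_end s2 = m.
  have [-> _] := awalk_cons_inv Hb.
  by apply: bt_end.
rewrite Hm in H11.
apply: (IH (l1 ++ l2)); last exact: awalk_cat Ha H11.
by move: Hs; rewrite !size_cat /= !addnS ltnS => /ltnW.
Qed.

Lemma reduced_cons s q : reduced q ->
  (forall s2 q', q = s2 :: q' -> ~ bt s s2) -> reduced (s :: q).
Proof. by case: q => //= s2 q' Hr H; split => //; apply: (H s2 q'). Qed.

Lemma reduced_rcons q s : reduced q ->
  (forall l s1, q = l ++ [:: s1] -> ~ bt s1 s) -> reduced (q ++ [:: s]).
Proof.
elim: q => [|s1 q IH] //= Hr H.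
case: q IH Hr H => [|s2 q] IH /= Hr H.
  by split => //; apply: (H [::] s1).
case: Hr => Hb Hr; split => //.
apply: IH => // l t E; apply: (H (s1 :: l)); by rewrite E.
Qed.

Lemma nbr_unique (x : V) (s s' : step) q :
  is_tree Q -> st_start s = x -> st_start s' = x ->
  awalk (fun t => t <> x) (st_end s) (st_end s') q -> st_end s = st_end s'.
Proof.
move=> [_ Htree] Hs Hs' Hq.
apply: NNPP => Hne.
have [r [Hr Rr]] := awalk_reduce Hq.
have Hr0 : r <> [::] by move=> E; subst r; inversion Hr.
pose c := s :: r ++ [:: flip s'].
have Hc : walk x x c.
  apply: walk_cons; first by rewrite Hs.
  apply: (walk_cat (awalk_walk Hr)); apply: walk_cons; first by rewrite st_start_flip.
  rewrite st_end_flip Hs'; exact: walk_nil.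
have Rc : reduced c.
  apply: reduced_cons.
    apply: reduced_rcons => // l s1 E [B1 B2].
    subst r; have [m [_ H2]] := awalk_cat_inv Hr.
    have [E1 [Hm _]] := awalk_cons_inv H2.
    apply: Hm; rewrite E1 -Hs'.
    have := f_equal flip (bt_flip B1 B2); rewrite !flipK => ->.
    by [].
  move=> s2 q' E [B1 B2].
  rewrite /c in Hc *; clear c Hc.
  case: r Hr Rr Hr0 E => // t r' Hr _ _ E.
  rewrite cat_cons in E; case: E => E1 _; subst t.
  have [_ [_ H5]] := awalk_cons_inv Hr.
  have := awalk_P H5 => [[Hx _]]; apply: Hx.
  by rewrite (bt_end B1 B2).
by have := Htree _ _ Hc Rc.
Qed.

Lemma walk_suffix m v p u : walk m v p -> List.In u (vs m p) ->
  exists q, walk u v q /\ (size q <= size p)%N.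
Proof.
elim=> [m'|m' w s p' E Hw IH] /=.
  by case=> // <-; exists [::]; split => //; exact: walk_nil.
case=> [<-|Hin]; first by exists (s :: p'); split => //; exact: walk_cons.
have [q [H1 H2]] := IH Hin; exists q; split => //; exact: leqW.
Qed.

Lemma walk_shorten u v p : walk u v p -> ~ List.NoDup (vs u p) ->
  exists q, walk u v q /\ (size q < size p)%N.
Proof.
elim=> [u'|u' w s p' E Hw IH] Hn.
  by exfalso; apply: Hn; constructor; [by [] | constructor].
have [Hin|Hin] := classic (List.In u' (vs (st_end s) p')).
  have [q [H1 H2]] := walk_suffix Hw Hin; by exists q.
have Hn' : ~ List.NoDup (vs (st_end s) p') by move=> Hd; apply: Hn; constructor.
have [q [H1 H2]] := IH Hn'; exists (s :: q); split => //; exact: walk_cons.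
Qed.

Definition Near (x : V) (s : step) :=
  exists p, walk x (st_end s) (p ++ [:: s]) /\ List.NoDup (vs x (p ++ [:: s])).

Lemma Near_cases x s : Near x s ->
  (st_start s = x /\ st_end s <> x) \/
  exists s1 q, [/\ st_start s1 = x, Near (st_end s1) s,
     awalk (fun t => t <> x) (st_end s1) (st_end s) q,
     st_start s <> x & st_end s <> x].
Proof.
case=> [[|s1 p] [Hw Hd]].
  left; have [E _] := walk_cons_inv Hw; split => // E'.
  move: Hd; rewrite /vs /= E' => /List.NoDup_cons_iff [H _]; apply: H; by left.
right; have [E Hw'] := walk_cons_inv Hw.
move: Hd; rewrite /vs map_cons => /List.NoDup_cons_iff [Hx Hd].
have Ha : awalk (fun t => t <> x) (st_end s1) (st_end s) (p ++ [:: s]).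
  apply: (walk_awalk (P := fun t => t <> x) Hw') => t Ht Et; apply: Hx; by rewrite -Et.
have [m [_ /awalk_cons_inv [Em [Pm _]]]] := awalk_cat_inv Ha.
exists s1, (p ++ [:: s]); split => //.
- by exists p.
- by rewrite -Em.
- exact: (proj2 (awalk_P Ha)).
Qed.

Lemma near_of_dist x y z n s : st_start s = y -> st_end s = z ->
  dist x y n -> dist x z n.+1 -> Near x s.
Proof.
move=> Hy Hz [[p [Hp Hs]] _] [_ Hmin].
have Hw : walk x z (p ++ [:: s]).
  apply: (walk_cat Hp); apply: walk_cons; first by rewrite Hy.
  rewrite Hz; exact: walk_nil.
exists p; rewrite Hz; split => //.
apply: NNPP => Hn; have [q [Hq Hsq]] := walk_shorten Hw Hn.
have := Hmin _ Hq; move: Hsq; rewrite size_cat /= Hs addn1.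
by move=> H1 H2; have := leq_ltn_trans H2 H1; rewrite ltnn.
Qed.

End GraphLemmas.

Local Open Scope ring_scope.

Section Crd.
Context {K : fieldType} {vT : vectType K}.
Implicit Types (s X : seq vT) (u v w e : vT).

Definition crd s w v : K := \sum_(i < size s | s`_i == w) coord (in_tuple s) i v.

Lemma crd_is_linear s w : linear_for *%R (crd s w).
Proof.
move=> a u v; rewrite /crd mulr_sumr -big_split /=; apply: eq_bigr => i _.
by rewrite linearP.
Qed.

HB.instance Definition _ s w := GRing.isLinear.Build K vT K *%R (crd s w) (crd_is_linear s w).

Lemma crd_mem s w e : free s -> e \in s -> crd s w e = (e == w)%:R.
Proof.
move=> fs /(nthP 0) [i Hi <-]; rewrite /crd.
have Ci j : coord (in_tuple s) j s`_i = (Ordinal Hi == j)%:R.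
  exact: (coord_free (X := in_tuple s) (Ordinal Hi) j fs).
case: (eqVneq s`_i w) => [<-|Nw].
  rewrite (bigD1 (Ordinal Hi)) //= Ci eqxx big1 ?addr0 // => j /andP[_ Hj].
  by rewrite Ci eq_sym (negbTE Hj).
rewrite big1 // => j /eqP Ej; rewrite Ci; case: eqP => // Eij.
by move: Nw; rewrite -Ej -Eij eqxx.
Qed.

Lemma crd_nth s (j : 'I_(size s)) v : uniq s -> crd s s`_j v = coord (in_tuple s) j v.
Proof.
move=> us; rewrite /crd (bigD1 j) //= big1 ?addr0 // => i /andP[/eqP E Hne].
by move: Hne; rewrite -(inj_eq val_inj) /= -(nth_uniq 0 (ltn_ord i) (ltn_ord j) us) E eqxx.
Qed.

Lemma crd_span0 s v : free s -> v \in <<s>>%VS -> (forall w, w \in s -> crd s w v = 0) -> v = 0.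
Proof.
move=> fs Hv H; rewrite -[s]/(tval (in_tuple s)) in Hv.
rewrite (coord_span Hv) big1 // => i _.
rewrite -crd_nth ?free_uniq // H ?scale0r // mem_nth //.
Qed.

Lemma crd_block s X w v : free s -> free X -> {subset X <= s} -> v \in <<X>>%VS ->
  crd s w v = crd X w v.
Proof.
move=> fs fX sub Hv; rewrite -[X]/(tval (in_tuple X)) in Hv.
rewrite (coord_span Hv) !linear_sum; apply: eq_bigr => i _.
have Hi : X`_i \in X by rewrite mem_nth.
by rewrite !linearZ /= (crd_mem _ fs (sub _ Hi)) (crd_mem _ fX Hi).
Qed.

Lemma crd_zero s X w v : free s -> {subset X <= s} -> v \in <<X>>%VS -> w \notin X ->
  crd s w v = 0.
Proof.
move=> fs sub Hv Hw; rewrite -[X]/(tval (in_tuple X)) in Hv.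
rewrite (coord_span Hv) !linear_sum big1 // => i _.
have Hi : X`_i \in X by rewrite mem_nth.
rewrite linearZ /= (crd_mem _ fs (sub _ Hi)).
case: eqP => [E|_]; last by rewrite mulr0.
by move: Hw; rewrite -E Hi.
Qed.

End Crd.


Section RepLemmas.
Context {k : fieldType} {Q : quiver} {R : rep k Q}.
Local Notation V z := 'rV[k]_(rdim R z).

Lemma castv_mem (U : subfam R) t t' (e : t = t') (v : V t) :
  (castv e v \in U t') = (v \in U t).
Proof. by case: t' / e. Qed.

Lemma castvK t t' (e : t = t') (v : V t) : castv (esym e) (castv e v) = v.
Proof. by case: t' / e. Qed.

Lemma castvKV t t' (e : t = t') (v : V t') : castv e (castv (esym e) v) = v.
Proof. by move: v; case: t' / e. Qed.

Lemma castvB t t' (e : t = t') (u v : V t) : castv e (u - v) = castv e u - castv e v.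
Proof. by case: t' / e. Qed.

Lemma castB (B : basisfam R) t t' (e : t = t') : B t' = map (castv e) (B t).
Proof. by case: t' / e; rewrite map_id. Qed.

Lemma esymK (T : Type) (a c : T) (e : a = c) : esym (esym e) = e.
Proof. by case: c / e. Qed.

Lemma nz_del (P : vert Q -> Prop) (N : subfam R) t (v : V t) :
  is_subrep P N -> v \in N t -> v != 0 -> P t.
Proof.
move=> [H0 _] Hv Hn; apply: NNPP => Hp.
by move: Hv; rewrite H0 // memv0 (negbTE Hn).
Qed.

Lemma nil_of_span0 t (s : seq (V t)) : free s -> <<s>>%VS = 0%VS -> s = [::].
Proof.
case: s => // e s fs Hs; have := free_not0 fs (mem_head e s).
have : e \in <<e :: s>>%VS by rewrite memv_span // mem_head.
by rewrite Hs memv0 => ->.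
Qed.

Lemma flatten_big (T : Type) n (F : 'I_n -> seq T) :
  flatten [seq F i | i <- enum 'I_n] = \big[cat/[::]]_(i < n) F i.
Proof.
rewrite [index_enum _]unlock -enumT; elim: (enum 'I_n) => [|i r IH]; first by rewrite big_nil.
by rewrite big_cons /= IH.
Qed.

Lemma line_eq t (U : {vspace V t}) (b : V t) : b \in U -> b != 0 -> \dim U = 1%N ->
  <[b]>%VS = U.
Proof.
move=> Hb Hb0 Hd; apply/eqP; rewrite memvE in Hb.
have [_ <-] := dimv_leqif_eq Hb; by rewrite dim_vline Hb0 Hd.
Qed.

Lemma direct_disj t n (N : 'I_n -> {vspace V t}) i j (w : V t) :
  directv (\sum_(l < n) N l) -> i != j -> w \in N i -> w \in N j -> w = 0.
Proof.
move=> /directv_sumP Hd Hij Hi Hj.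
have H0 := Hd i isT.
have : w \in (N i :&: \sum_(l | true && (l != i)) N l)%VS.
  rewrite memv_cap Hi /=.
  apply: (subvP (sumv_sup j _ _)) => //; by rewrite eq_sym Hij.
by rewrite H0 memv0 => /eqP.
Qed.

Lemma rb_inv W U x (b : V x) B : rad_basis W U b B ->
  (forall z, free (B z) /\ <<B z>>%VS = U z) /\ B x = [:: b].
Proof.
elim=> {W U x b B}.
- move=> W U x b B Hsub Wx Hdim Hz0 Hb Hb0 HBx HBz; split => // z.
  have [->|Hz] := classic (z = x).
    by rewrite HBx seq1_free Hb0 span_seq1 (line_eq Hb).
  by rewrite HBz // Hz0 // nil_free span_nil.
move=> W U x b B n N y bi Bi Hind Wx Hdim Hlen Hdec HNind Hhom Hadj Hrad Hb Hb0
  Harr1 Harr2 HBi IH HBx HBz.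
have Bix i : Bi i x = [::].
  apply: nil_of_span0; first exact: ((IH i).1 x).1.
  rewrite ((IH i).1 x).2; apply: (HNind i).1.1; by case.
have HBx' : B x = [:: b].
  apply: perm_small_eq => //; move: HBx; rewrite flatten_big big1 //.
split => // z.
have [->|Hzx] := classic (z = x).
  by rewrite HBx' seq1_free Hb0 span_seq1 (line_eq Hb).
have HBz' := HBz z Hzx.
have [Wz|Wz] := classic (W z).
  have [Hs Hdir] := Hdec z (conj Wz Hzx).
  rewrite (perm_free HBz') (eq_span (perm_mem HBz')) flatten_big span_bigcat.
  have Es i : <<Bi i z>>%VS = N i z by exact: ((IH i).1 z).2.
  rewrite (eq_bigr _ (fun i _ => Es i)) Hs; split => //.
  apply: bigcat_free => [|i _]; last exact: ((IH i).1 z).1.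
  apply/directv_sumP => i _; move/directv_sumP: Hdir => Hd.
  rewrite Es (eq_bigr _ (fun j _ => Es j)); exact: Hd.
have Bz0 i : Bi i z = [::].
  apply: nil_of_span0; first exact: ((IH i).1 z).1.
  rewrite ((IH i).1 z).2; apply: (HNind i).1.1; by case.
move: HBz'; rewrite flatten_big big1 // => /perm_nilP ->.
by rewrite nil_free span_nil (Hind.1.1 z Wz).
Qed.

Lemma awalk_step (P : vert Q -> Prop) y0 (a : arr Q) q :
  awalk P y0 (src a) q -> P (tgt a) -> awalk P y0 (tgt a) (q ++ [:: (a, true)]).
Proof.
move=> H Pt; apply: (awalk_cat H); apply: aw_cons => //.
  exact: (proj2 (awalk_P H)).
exact: aw_nil.
Qed.

Lemma awalk_stepb (P : vert Q -> Prop) y0 (a : arr Q) q :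
  awalk P y0 (tgt a) q -> P (src a) -> awalk P y0 (src a) (q ++ [:: (a, false)]).
Proof.
move=> H Pt; apply: (awalk_cat H); apply: aw_cons => //.
  exact: (proj2 (awalk_P H)).
exact: aw_nil.
Qed.

Lemma comp (P : vert Q -> Prop) (N : subfam R) y0 t :
  indecomposable P N -> N y0 != 0%VS -> N t != 0%VS -> exists q, awalk P y0 t q.
Proof.
move=> [[H0 Harr] [_ Hind]] Hy0 Ht.
pose rc t := exists q, awalk P y0 t q.
pose sel t : bool := if excluded_middle_informative (rc t) then true else false.
have selP u : sel u = true <-> rc u.
  by rewrite /sel; case: excluded_middle_informative.
have selN u : sel u = false -> ~ rc u.
  by move=> E /selP; rewrite E.
have Pnz u : N u != 0%VS -> P u.
  by move=> Hn; apply: NNPP => Hp; move: Hn; rewrite H0 // eqxx.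
pose U1 : subfam R := fun u => if sel u then N u else 0%VS.
pose U2 : subfam R := fun u => if sel u then 0%VS else N u.
have S1 : is_subrep P U1.
  split=> [z Hz|a Ps Pt v]; first by rewrite /U1 H0 //; case: (sel z).
  rewrite /U1; case Es: (sel (src a)).
    have [q Hq] := (selP _).1 Es.
    have -> : sel (tgt a) = true by apply/selP; exists (q ++ [:: (a, true)]); exact: awalk_step.
    exact: Harr.
  by rewrite memv0 => /eqP ->; rewrite mul0mx mem0v.
have S2 : is_subrep P U2.
  split=> [z Hz|a Ps Pt v]; first by rewrite /U2 H0 //; case: (sel z).
  rewrite /U2; case Es: (sel (src a)).
    by rewrite memv0 => /eqP ->; rewrite mul0mx mem0v.
  case Et: (sel (tgt a)); last exact: Harr.
  have [q Hq] := (selP _).1 Et.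
  by exfalso; apply: (selN _ Es); exists (q ++ [:: (a, false)]); exact: awalk_stepb.
have Hdec : forall z, P z -> (U1 z + U2 z)%VS = N z /\ directv (U1 z + U2 z).
  move=> z _; rewrite /U1 /U2; case: (sel z).
    by split; [rewrite addv0 | apply/directv_addP; rewrite capv0].
  by split; [rewrite add0v | apply/directv_addP; rewrite cap0v].
have [H1|H2] := Hind U1 U2 S1 S2 Hdec.
  have := H1 y0; rewrite /U1.
  have -> : sel y0 = true by apply/selP; exists [::]; apply: aw_nil; exact: Pnz.
  by move=> E; move: Hy0; rewrite E eqxx.
apply/selP; case Es: (sel t) => //.
by have := H2 t; rewrite /U2 Es => E; move: Ht; rewrite E eqxx.
Qed.

End RepLemmas.


Section Main.
Context {k : fieldType} {Q : quiver} {R : rep k Q}.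
Local Notation V z := 'rV[k]_(rdim R z).

Lemma rad_dim W (U : subfam R) x : radiation W U x -> \dim (U x) = 1%N.
Proof. by case. Qed.

Lemma direct_not t n (N : 'I_n -> {vspace V t}) i (w : V t) :
  directv (\sum_(l < n) N l) -> w \in N i -> w != 0 ->
  w \notin (\sum_(l < n | l != i) N l)%VS.
Proof.
move=> /directv_sumP Hd Hi Hw; apply/negP => Hs.
have H0 := Hd i isT.
have : w \in (N i :&: \sum_(l | true && (l != i)) N l)%VS by rewrite memv_cap Hi.
by rewrite H0 memv0 (negbTE Hw).
Qed.

Definition binv (U : subfam R) (B : basisfam R) :=
  forall z, free (B z) /\ <<B z>>%VS = U z.

Lemma main W U x (b : V x) B : rad_basis W U b B -> is_tree Q ->
  forall a : arr Q,
  (Near x (a, true) -> forall w, w \in B (tgt a) ->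
     exists! u, u \in B (src a) /\ crd (B (tgt a)) w (u *m mat R a) != 0)
  /\ (Near x (a, false) -> forall w, w \in B (src a) ->
     exists! u, u \in B (tgt a) /\ crd (B (tgt a)) u (w *m mat R a) != 0).
Proof.
move=> H; move: (rb_inv H); elim: H => {W U x b B}.
- move=> W U x b B Hsub Wx Hdim Hz0 Hb Hb0 HBx HBz _ Htree a; split.
    move=> /Near_cases [[_ Hf]|[s1 [q [_ _ _ _ Hf]]]] w; rewrite HBz //.
  move=> /Near_cases [[_ Hf]|[s1 [q [_ _ _ _ Hf]]]] w; rewrite HBz //.
move=> W U x b B n N y bi Bi Hind Wx Hdim Hlen Hdec HNind Hhom Hadj Hrad Hb Hb0
  Harr1 Harr2 HBi IH HBx HBz [Hinv HBx'] Htree a.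
have Iinv i := rb_inv (HBi i).
have Bix i : Bi i x = [::].
  apply: nil_of_span0; first exact: ((Iinv i).1 x).1.
  rewrite ((Iinv i).1 x).2; apply: (HNind i).1.1; by case.
have subB i t : {subset Bi i t <= B t}.
  have [->|Ht] := classic (t = x); first by rewrite Bix.
  move=> w Hw; rewrite (perm_mem (HBz t Ht)); apply/flatten_mapP.
  by exists i => //; rewrite mem_enum.
have memB t w : t <> x -> w \in B t -> exists i, w \in Bi i t.
  move=> Ht; rewrite (perm_mem (HBz t Ht)) => /flatten_mapP [i _ Hw]; by exists i.
have blk i t w : w \in Bi i t -> [/\ w != 0, w \in N i t & del W x t].
  move=> Hw; have Hn := free_not0 ((Iinv i).1 t).1 Hw.
  have Hm : w \in N i t by rewrite -((Iinv i).1 t).2 memv_span.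
  split => //; exact: nz_del (HNind i).1 Hm Hn.
have Nnz i t w : w \in N i t -> w != 0 -> N i t != 0%VS.
  by move=> Hw Hn; apply/negP => /eqP E; move: Hw; rewrite E memv0 (negbTE Hn).
have KEY (s0 : arr Q * bool) i t : st_start s0 = x ->
    (exists q, awalk (fun v => v <> x) (st_end s0) t q) -> N i t != 0%VS ->
    y i = st_end s0.
  move=> Hs0 [q Hq] Hnt.
  have Hy : N i (y i) != 0%VS.
    by apply/negP => /eqP E; have := rad_dim (Hrad i); rewrite E dimv0.
  have [q1 Hq1] := comp (HNind i) Hy Hnt.
  have Hq1' := awalk_weak (P' := fun v => v <> x) (fun v (H : del W x v) => H.2) Hq1.
  have Hq2 := awalk_cat Hq1' (awalk_rev Hq).
  have [a' Ha'] := Hadj i.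
  have [s' [Hs1 Hs2]] : exists s' : arr Q * bool, st_start s' = x /\ st_end s' = y i.
    by case: Ha' => [[E1 E2]|[E1 E2]]; [exists (a', true) | exists (a', false)].
  rewrite -Hs2 in Hq2; rewrite -Hs2; exact: nbr_unique Htree Hs1 Hs0 Hq2.
split.
- move=> /Near_cases [[/= Ex Hf]|[s1 [q [Hs1 Hnear Hq /= Hn Hf]]]] w Hw.
  +
    have [i Hwi] := memB _ _ Hf Hw.
    have [Hw0 HwN Hdel] := blk _ _ _ Hwi.
    have e : y i = tgt a.
      apply: (KEY (a, true)) => //; last exact: Nnz HwN Hw0.
      by exists [::]; apply: aw_nil.
    have Ewi : w = castv e (bi i).
      by move: Hwi; rewrite (castB (Bi i) e) ((Iinv i).2) /= mem_seq1 => /eqP.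
    have [_ Hs] := Harr1 i a Ex (esym e).
    rewrite -(castv_mem (fun t => \sum_(j < n | j != i) N j t)%VS e) castvB castvKV -Ewi in Hs.
    subst x.
    exists b; split.
      split; first by rewrite HBx' mem_head.
      set v := _ - _ in Hs.
      have -> : b *m mat R a = w + v by rewrite /v addrC subrK.
      rewrite linearD /= (crd_mem _ (Hinv _).1 Hw) eqxx.
      rewrite (@crd_zero _ _ _ (\big[cat/[::]]_(j < n | j != i) Bi j (tgt a))) ?addr0 ?oner_neq0 //.
      * exact: (Hinv _).1.
      * apply: (big_ind (fun s => {subset s <= B (tgt a)})) => //.
        by move=> s1' s2' H1 H2 z; rewrite mem_cat => /orP [/H1|/H2].
      * rewrite span_bigcat (eq_bigr _ (fun j _ => ((Iinv j).1 (tgt a)).2)) //.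
      * apply/negP => /memv_span; rewrite span_bigcat (eq_bigr _ (fun j _ => ((Iinv j).1 (tgt a)).2)).
        apply/negP; apply: direct_not => //; exact: (Hdec _ Hdel).2.
    by move=> u' []; rewrite HBx' mem_seq1 => /eqP ->.
  +
    have [i Hwi] := memB _ _ Hf Hw.
    have [Hw0 HwN Hdel] := blk _ _ _ Hwi.
    have e : y i = st_end s1.
      apply: (KEY s1 i (tgt a)) => //; first by exists q.
      exact: Nnz HwN Hw0.
    rewrite -e in Hnear.
    have [u [[Hu Hc] Hun]] := ((IH i (Iinv i) Htree a).1 Hnear w Hwi).
    have [Hu0 HuN Hdelu] := blk _ _ _ Hu.
    have HuM : u *m mat R a \in N i (tgt a) := (HNind i).1.2 a Hdelu Hdel u HuN.
    have Eb : crd (B (tgt a)) w (u *m mat R a) = crd (Bi i (tgt a)) w (u *m mat R a).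
      apply: crd_block; [exact: (Hinv _).1 | exact: ((Iinv i).1 _).1 | exact: subB |].
      by rewrite ((Iinv i).1 _).2.
    exists u; split; first by split; [exact: (subB _ _ _ Hu) | rewrite Eb].
    move=> u' [Hu' Hc'].
    have [j Hu'j] := memB _ _ Hn Hu'.
    have [Hu'0 Hu'N Hdelu'] := blk _ _ _ Hu'j.
    have Hu'M : u' *m mat R a \in N j (tgt a) := (HNind j).1.2 a Hdelu' Hdel u' Hu'N.
    case: (eqVneq j i) => [Eji|Nji].
      subst j; apply: Hun; split => //.
      rewrite -(@crd_block _ _ (B (tgt a))) //; [exact: (Hinv _).1 | exact: ((Iinv i).1 _).1 | exact: subB |].
      by rewrite ((Iinv i).1 _).2.
    exfalso; move: Hc'; rewrite (@crd_zero _ _ _ (Bi j (tgt a))) ?eqxx //.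
    * exact: (Hinv _).1.
    * exact: subB.
    * by rewrite ((Iinv j).1 _).2.
    * apply/negP => Hwj; have [_ HwNj _] := blk _ _ _ Hwj.
      by move: Hw0; rewrite (direct_disj (Hdec _ Hdel).2 Nji HwNj HwN) eqxx.
- move=> /Near_cases [[/= Ex Hf]|[s1 [q [Hs1 Hnear Hq /= Hn Hf]]]] w Hw.
  +
    have [i Hwi] := memB _ _ Hf Hw.
    have [Hw0 HwN Hdel] := blk _ _ _ Hwi.
    have e : y i = src a.
      apply: (KEY (a, false)) => //; last exact: Nnz HwN Hw0.
      by exists [::]; apply: aw_nil.
    have Ewi : w = castv e (bi i).
      by move: Hwi; rewrite (castB (Bi i) e) ((Iinv i).2) /= mem_seq1 => /eqP.
    have [_ Hs] := Harr2 i a (esym e) Ex.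
    subst x; rewrite esymK /= -Ewi in Hs.
    exists b; split.
      split; first by rewrite HBx' mem_head.
      by rewrite Hs (crd_mem _ (Hinv _).1) ?eqxx ?oner_neq0 // HBx' mem_head.
    by move=> u' []; rewrite HBx' mem_seq1 => /eqP ->.
  +
    have [i Hwi] := memB _ _ Hf Hw.
    have [Hw0 HwN Hdel] := blk _ _ _ Hwi.
    have e : y i = st_end s1.
      apply: (KEY s1 i (src a)) => //; first by exists q.
      exact: Nnz HwN Hw0.
    rewrite -e in Hnear.
    have [u [[Hu Hc] Hun]] := ((IH i (Iinv i) Htree a).2 Hnear w Hwi).
    have [Hu0 HuN Hdelu] := blk _ _ _ Hu.
    have HwM : w *m mat R a \in N i (tgt a) := (HNind i).1.2 a Hdel Hdelu w HwN.
    have Eb u1 : u1 \in Bi i (tgt a) ->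
        crd (B (tgt a)) u1 (w *m mat R a) = crd (Bi i (tgt a)) u1 (w *m mat R a).
      move=> _; apply: crd_block; [exact: (Hinv _).1 | exact: ((Iinv i).1 _).1 | exact: subB |].
      by rewrite ((Iinv i).1 _).2.
    exists u; split; first by split; [exact: (subB _ _ _ Hu) | rewrite Eb].
    move=> u' [Hu' Hc'].
    have [j Hu'j] := memB _ _ Hn Hu'.
    have [Hu'0 Hu'N Hdelu'] := blk _ _ _ Hu'j.
    case: (eqVneq j i) => [Eji|Nji].
      subst j; apply: Hun; split => //; by rewrite -Eb.
    exfalso; move: Hc'; rewrite (@crd_zero _ _ _ (Bi i (tgt a))) ?eqxx //.
    * exact: (Hinv _).1.
    * exact: subB.
    * by rewrite ((Iinv i).1 _).2.
    * apply/negP => Hu'i; have [_ Hu'Ni _] := blk _ _ _ Hu'i.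
      by move: Hu'0; rewrite (direct_disj (Hdec _ Hdelu').2 Nji Hu'N Hu'Ni) eqxx.
Qed.

End Main.


Section Fin.
Context {k : fieldType} {Q : quiver} {R : rep k Q}.

Lemma arrow_uniq (a a0 : arr Q) : is_tree Q -> src a = src a0 -> tgt a = tgt a0 -> a = a0.
Proof.
move=> [_ Ht] Es Et; apply: NNPP => Hne.
have Hw : walk (src a) (src a) [:: (a, true); (a0, false)].
  apply: walk_cons; first by [].
  apply: walk_cons; first by rewrite /st_start /st_end /= Et.
  rewrite /st_end /= Es; exact: walk_nil.
have Hr : reduced [:: (a, true); (a0, false)] by split => // [[]].
by have := Ht _ _ Hw Hr.
Qed.

Lemma arrow_norev (a a0 : arr Q) : is_tree Q -> src a = tgt a0 -> tgt a = src a0 -> False.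
Proof.
move=> [_ Ht] Es Et.
have Hw : walk (src a) (src a) [:: (a, true); (a0, true)].
  apply: walk_cons; first by [].
  apply: walk_cons; first by rewrite /st_start /st_end /= Et.
  rewrite /st_end /= Es; exact: walk_nil.
have Hr : reduced [:: (a, true); (a0, true)] by split => // [[]].
by have := Ht _ _ Hw Hr.
Qed.

Lemma garrow (B : basisfam R) (a0 : arr Q) (i : 'I_(size (B (src a0))))
    (j : 'I_(size (B (tgt a0)))) : is_tree Q ->
  gamma_arrow (existT _ (src a0) i : gamma_vert B) (existT _ (tgt a0) j) <->
  coord (in_tuple (B (tgt a0))) j ((B (src a0))`_i *m mat R a0) != 0.
Proof.
move=> Htr; split.
  move=> [a [i' [j' [E1 [E2 Hc]]]]].
  have Es := f_equal (@projT1 _ _) E1; have Et := f_equal (@projT1 _ _) E2.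
  simpl in Es, Et.
  have Ea := arrow_uniq Htr (esym Es) (esym Et); subst a.
  have -> := inj_pair2 _ _ _ _ _ E1; have -> := inj_pair2 _ _ _ _ _ E2.
  by rewrite (tnth_nth 0) in Hc.
move=> Hc; exists a0, i, j; split => //; split => //.
by rewrite (tnth_nth 0).
Qed.

Lemma garrow_rev (B : basisfam R) (a0 : arr Q) (i : 'I_(size (B (src a0))))
    (j : 'I_(size (B (tgt a0)))) : is_tree Q ->
  ~ gamma_arrow (existT _ (tgt a0) j : gamma_vert B) (existT _ (src a0) i).
Proof.
move=> Htr [a [i' [j' [E1 [E2 _]]]]].
have Es := f_equal (@projT1 _ _) E1; have Et := f_equal (@projT1 _ _) E2.
simpl in Es, Et.
exact: arrow_norev Htr (esym Es) (esym Et).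
Qed.

Lemma maxrank : ext1_self_zero R -> forall a0 : arr Q,
  row_free (mat R a0) || row_full (mat R a0).
Proof.
move=> Hext a0; case: (boolP (row_free (mat R a0))) => // Hnf.
case: (boolP (row_full (mat R a0))) => // Hnu; exfalso.
set M := mat R a0 in Hnf Hnu.
have : kermx M != 0 by rewrite kermx_eq0.
case/rowV0Pn => v /sub_kermxP Hv Hv0.
have [w Hw] : exists w : 'rV_(rdim R (tgt a0)), ~~ (w <= M)%MS.
  apply: NNPP => Hn; move: Hnu; rewrite /row_full; apply/negP/negPn.
  rewrite eqn_leq rank_leq_col /=.
  have : (1%:M <= M)%MS.
    apply/row_subP => i; apply: NNPP => Hi; apply: Hn; exists (row i 1%:M).
    by apply/negP.
  by move/mxrankS; rewrite mxrank1.
case/rV0Pn: Hv0 => i Hi.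
pose G0 : 'M_(rdim R (src a0), rdim R (tgt a0)) := (v 0 i)^-1 *: (delta_mx i 0 *m w).
have HG : v *m G0 = w.
  rewrite /G0 -scalemxAr mulmxA -colE (mx11_scalar (col i v)) mul_scalar_mx mxE.
  by rewrite scalerA mulVf // scale1r.
pose g (a : arr Q) : 'M_(rdim R (src a), rdim R (tgt a)) :=
  match excluded_middle_informative (a0 = a) with
  | left e => eq_rect a0 (fun a => 'M_(rdim R (src a), rdim R (tgt a))) G0 a e
  | right _ => 0 end.
have Hg : g a0 = G0.
  rewrite /g; case: excluded_middle_informative => [e|//].
  by rewrite -eq_rect_eq.
have [f Hf] := Hext g.
have := Hf a0; rewrite Hg -/M => EG.
move: Hw; apply/negP/negPn; rewrite -HG EG mulmxBr !mulmxA Hv mul0mx subr0.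
by apply/submxP; exists (v *m f (src a0)).
Qed.

Lemma inj_of m n (M : 'M[k]_(m, n)) : row_free M || row_full M -> (m <= n)%N ->
  forall v : 'rV_m, v *m M = 0 -> v = 0.
Proof.
move=> H Hmn v Hv.
have Hf : row_free M.
  case/orP: H => // /eqP Hr; rewrite /row_free eqn_leq rank_leq_row /= Hr //.
by apply: (row_free_inj Hf); rewrite Hv mul0mx.
Qed.

Lemma surj_of m n (M : 'M[k]_(m, n)) : row_free M || row_full M -> (n <= m)%N ->
  forall w : 'rV_n, exists v, v *m M = w.
Proof.
move=> H Hmn w.
have Hf : row_full M.
  case/orP: H => // /eqP Hr; rewrite /row_full eqn_leq rank_leq_col /= Hr //.
case/row_fullP: Hf => C HC; exists (w *m C); by rewrite -mulmxA HC mulmx1.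
Qed.

End Fin.


Section Aux.
Context {k : fieldType}.

Lemma idx_of m (s : seq 'rV[k]_m) x : x \in s -> exists j : 'I_(size s), s`_j = x.
Proof. by case/(nthP 0) => i Hi <-; exists (Ordinal Hi). Qed.

Lemma nth_inj m (s : seq 'rV[k]_m) (i j : 'I_(size s)) : uniq s -> s`_i = s`_j -> i = j.
Proof. by move=> us E; apply: val_inj; apply/eqP; rewrite -(nth_uniq 0 (ltn_ord i) (ltn_ord j) us) E. Qed.

Lemma sum_zero m n (Bz : seq 'rV[k]_m) (By : seq 'rV[k]_n) (M : 'M[k]_(m, n)) u v :
  v \in <<Bz>>%VS -> (forall w, w \in Bz -> crd By u (w *m M) = 0) ->
  crd By u (v *m M) = 0.
Proof.
move=> Hv H; rewrite -[Bz]/(tval (in_tuple Bz)) in Hv.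
rewrite (coord_span Hv) mulmx_suml linear_sum big1 // => l _.
by rewrite -scalemxAl linearZ /= H ?mulr0 // mem_nth.
Qed.

Lemma sum_single m n (By : seq 'rV[k]_m) (Bz : seq 'rV[k]_n) (M : 'M[k]_(m, n)) w
    (j' : 'I_(size By)) v :
  uniq By -> v \in <<By>>%VS ->
  (forall u, u \in By -> crd Bz w (u *m M) != 0 -> u = By`_j') ->
  crd Bz w (v *m M) = coord (in_tuple By) j' v * crd Bz w (By`_j' *m M).
Proof.
move=> uB Hv H; rewrite -[By]/(tval (in_tuple By)) in Hv.
rewrite {1}(coord_span Hv) mulmx_suml linear_sum (bigD1 j') //= big1 ?addr0.
  by rewrite -scalemxAl linearZ.
move=> l Hl; rewrite -scalemxAl linearZ /=.
case: (eqVneq (crd Bz w (By`_l *m M)) 0) => [->|Hc]; first by rewrite mulr0.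
have E := H _ (mem_nth 0 (ltn_ord l)) Hc.
by move: Hl; rewrite (nth_inj uB E) eqxx.
Qed.

End Aux.

Unset Implicit Arguments.

Theorem proposition3 (k : fieldType) (Q : quiver) (R : rep k Q)
    (x : vert Q) (b : 'rV[k]_(rdim R x)) (B : basisfam R) (y z : vert Q) :
  is_tree Q -> locally_finite Q -> fin_dim R ->
  radiation (fun _ => True) (full_fam R) x ->
  exceptional R ->
  rad_basis (fun _ => True) (full_fam R) b B ->
  adjacent y z ->
  (exists n, dist x y n /\ dist x z n.+1) ->
  [/\ (forall j : 'I_(size (B z)),
         exists! j' : 'I_(size (B y)),
           joined (existT _ z j : gamma_vert B) (existT _ y j')),
      ((rdim R y <= rdim R z)%N ->
         forall j' : 'I_(size (B y)), exists j : 'I_(size (B z)),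
           joined (existT _ z j : gamma_vert B) (existT _ y j')) &
      ((rdim R z <= rdim R y)%N ->
         forall (j' : 'I_(size (B y))) (j1 j2 : 'I_(size (B z))),
           joined (existT _ z j1 : gamma_vert B) (existT _ y j') ->
           joined (existT _ z j2 : gamma_vert B) (existT _ y j') -> j1 = j2)].
Proof.
move=> Htr _ _ _ [_ Hext] Hrb [a0 Ha0] [n [Hdy Hdz]].
have [Hinv _] := rb_inv Hrb.
have fB t : free (B t) := (Hinv t).1.
have uB t : uniq (B t) := free_uniq (fB t).
have sB t (v : 'rV_(rdim R t)) : v \in <<B t>>%VS by rewrite (Hinv t).2 memvf.
have Hmr := maxrank Hext a0.
have [Hm1 Hm2] := main Hrb Htr a0.
case: Ha0 => [[Ey Ez]|[Ez Ey]].
- have Hn : Near x (a0, true) := near_of_dist (s := (a0, true)) Ey Ez Hdy Hdz.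
  subst y z.
  have J j j' : joined (existT _ (tgt a0) j : gamma_vert B) (existT _ (src a0) j') <->
      crd (B (tgt a0)) (B (tgt a0))`_j ((B (src a0))`_j' *m mat R a0) != 0.
    rewrite crd_nth; last by apply: uB.
    split.
      by case=> [H|H]; [case: (garrow_rev Htr H) | exact: (proj1 (garrow _ _ Htr) H)].
    by move=> H; right; exact: (proj2 (garrow _ _ Htr) H).
  have C1 := Hm1 Hn.
  split.
  + move=> j; have [u [[Hu Hc] Hun]] := C1 _ (mem_nth 0 (ltn_ord j)).
    have [j' Ej'] := idx_of Hu; exists j'; split; first by apply/J; rewrite Ej'.
    move=> j'' /J Hc''; apply: (nth_inj (uB _)).
    by rewrite Ej'; apply: Hun; split => //; exact: (mem_nth 0 (ltn_ord _)).
  + move=> Hle j'; have inj := inj_of Hmr Hle.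
    apply: NNPP => Hno.
    have Hu0 : (B (src a0))`_j' != 0 := free_not0 (fB _) (mem_nth 0 (ltn_ord j')).
    have : (B (src a0))`_j' *m mat R a0 = 0.
      apply: (crd_span0 (fB (tgt a0)) (sB _ _)) => w Hw.
      have [j Ej] := idx_of Hw; apply: NNPP => Hc; apply: Hno; exists j.
      by apply/J; rewrite Ej; apply/eqP.
    by move/inj => E; rewrite E eqxx in Hu0.
  + move=> Hle j' j1 j2 /J H1 /J H2; apply: (nth_inj (uB _)); apply: NNPP => Hne.
    have [v Hv] := surj_of Hmr Hle (B (tgt a0))`_j1.
    have Uw (j0 : 'I_(size (B (tgt a0)))) : crd (B (tgt a0)) (B (tgt a0))`_j0 ((B (src a0))`_j' *m mat R a0) != 0 ->
        forall u, u \in B (src a0) -> crd (B (tgt a0)) (B (tgt a0))`_j0 (u *m mat R a0) != 0 ->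
        u = (B (src a0))`_j'.
      move=> Hj0 u Hu Hc; have [u0 [_ Hun]] := C1 _ (mem_nth 0 (ltn_ord j0)).
      rewrite -(Hun _ (conj Hu Hc)); apply: Hun; split => //; exact: (mem_nth 0 (ltn_ord _)).
    have E1 := sum_single (uB _) (sB _ v) (Uw _ H1).
    have E2 := sum_single (uB _) (sB _ v) (Uw _ H2).
    rewrite Hv (crd_mem _ (fB _) (mem_nth 0 (ltn_ord j1))) eqxx in E1.
    rewrite Hv (crd_mem _ (fB _) (mem_nth 0 (ltn_ord j1))) in E2.
    move: E2; case: eqP => [E|_]; first by case: (Hne E).
    move/esym/eqP; rewrite mulf_eq0 (negbTE H2) orbF => /eqP Ec.
    by move: E1; rewrite Ec mul0r => /eqP; rewrite oner_eq0.
- have Hn : Near x (a0, false) := near_of_dist (s := (a0, false)) Ey Ez Hdy Hdz.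
  subst y z.
  have J j j' : joined (existT _ (src a0) j : gamma_vert B) (existT _ (tgt a0) j') <->
      crd (B (tgt a0)) (B (tgt a0))`_j' ((B (src a0))`_j *m mat R a0) != 0.
    rewrite crd_nth; last by apply: uB.
    split.
      by case=> [H|H]; [exact: (proj1 (garrow _ _ Htr) H) | case: (garrow_rev Htr H)].
    by move=> H; left; exact: (proj2 (garrow _ _ Htr) H).
  have C1 := Hm2 Hn.
  split.
  + move=> j; have [u [[Hu Hc] Hun]] := C1 _ (mem_nth 0 (ltn_ord j)).
    have [j' Ej'] := idx_of Hu; exists j'; split; first by apply/J; rewrite Ej'.
    move=> j'' /J Hc''; apply: (nth_inj (uB _)).
    by rewrite Ej'; apply: Hun; split => //; exact: (mem_nth 0 (ltn_ord _)).
  + move=> Hle j'; have [v Hv] := surj_of Hmr Hle (B (tgt a0))`_j'.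
    apply: NNPP => Hno.
    have : crd (B (tgt a0)) (B (tgt a0))`_j' (v *m mat R a0) = 0.
      apply: (sum_zero (sB _ _)) => w Hw.
      have [j Ej] := idx_of Hw; apply: NNPP => Hc; apply: Hno; exists j.
      by apply/J; rewrite Ej; apply/eqP.
    rewrite Hv (crd_mem _ (fB _) (mem_nth 0 (ltn_ord j'))) eqxx => /eqP.
    by rewrite oner_eq0.
  + move=> Hle j' j1 j2 /J H1 /J H2; apply: NNPP => Hne.
    have inj := inj_of Hmr Hle.
    set u := (B (tgt a0))`_j' in H1 H2.
    set w1 := (B (src a0))`_j1 in H1; set w2 := (B (src a0))`_j2 in H2.
    set c1 := crd _ u (w1 *m _) in H1; set c2 := crd _ u (w2 *m _) in H2.
    have Hw12 : w1 != w2 by apply/eqP => E; apply: Hne; apply: (nth_inj (uB _)).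
    have Uw (w : 'rV_(rdim R (src a0))) : w \in B (src a0) ->
        crd (B (tgt a0)) u (w *m mat R a0) != 0 ->
        forall u', u' \in B (tgt a0) -> crd (B (tgt a0)) u' (w *m mat R a0) != 0 -> u' = u.
      move=> Hw Hc u' Hu' Hc'; have [u0 [_ Hun]] := C1 _ Hw.
      rewrite -(Hun _ (conj Hu' Hc')); apply: Hun; split => //; exact: (mem_nth 0 (ltn_ord _)).
    have Hw1 : w1 \in B (src a0) by exact: (mem_nth 0 (ltn_ord _)).
    have Hw2 : w2 \in B (src a0) by exact: (mem_nth 0 (ltn_ord _)).
    pose v := c2 *: w1 - c1 *: w2.
    have : v *m mat R a0 = 0.
      apply: (crd_span0 (fB (tgt a0)) (sB _ _)) => u' Hu'.
      rewrite /v mulmxBl -!scalemxAl linearB !linearZ /=.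
      case: (eqVneq u' u) => [->|Hne'].
        by rewrite -/c1 -/c2 mulrC subrr.
      have Z w (Hw : w \in B (src a0)) (Hc : crd (B (tgt a0)) u (w *m mat R a0) != 0) :
          crd (B (tgt a0)) u' (w *m mat R a0) = 0.
        apply/eqP; apply: contraNT Hne' => Hc'; apply/eqP; exact: Uw Hw Hc u' Hu' Hc'.
      by rewrite (Z _ Hw1 H1) (Z _ Hw2 H2) !mulr0 subrr.
    move/inj => Ev.
    have : crd (B (src a0)) w1 v = 0 by rewrite Ev linear0.
    rewrite /v linearB !linearZ /= (crd_mem _ (fB _) Hw1) (crd_mem _ (fB _) Hw2) eqxx.
    rewrite eq_sym (negbTE Hw12) mulr1 mulr0 subr0 => Ec.
    by move: H2; rewrite Ec eqxx.
Qed.
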